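(* Let $d\ge2$. For $k\in\mathbb{N}$ let $g_k$ be the density on $S^d$ given by $g_k(\theta_0)=\frac{1+\cos^k\theta_0}{V_k}$, where $V_k=\int_{S^d}(1+\cos^k\theta_0)\,dS^d$. For $k,l\in\mathbb{N}$, let $Y_k,Y_l$ be independent isotropic random variables on $S^d$ with densities $g_k$ and $g_l$ respectively. Then $$V(Y_k+Y_l)=\frac{2\big(V(Y_k)+V(Y_l)\big)-V(Y_k)V(Y_l)}{2}.$$
   Context: $S^d=\{x\in\mathbb{R}^{d+1}:\|x\|=1\}$, $P=(1,0,\dots,0)$, and $\theta_0\in[0,\pi]$ denotes the first polar angle of a point $x\in S^d$, so $x_0=\cos\theta_0=\langle x,P\rangle$. The variance of a random variable $X$ on $S^d$ is $V(X)=E[\|X-P\|^2]=E[2-2\cos\theta_0]$. An isotropic random variable is one whose density depends only on $\theta_0$, written $y\mapsto F(\langle y,P\rangle)$. The sum $X_1+X_2$ of independent isotropic random variables with densities $F_1(\langle y,P\rangle)$, $F_2(\langle y,P\rangle)$ is the random variable with density $f(x)=\int_{S^d}F_1(\langle x',P\rangle)F_2(\langle x,x'\rangle)\,dx'$ (first move from $P$ to $x'$ according to $X_1$, then from $x'$ isotropically around $x'$ according to $X_2$). *)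

(* Defs.v *)
From HB Require Import structures.
From mathcomp Require Import all_boot all_order all_algebra.
From mathcomp Require Import all_classical all_reals all_analysis.
Set Implicit Arguments. Unset Strict Implicit. Unset Printing Implicit Defensive.
Import Order.TTheory GRing.Theory Num.Theory.
Import numFieldNormedType.Exports.
Local Open Scope classical_set_scope.
Local Open Scope ring_scope.

Section Sphere.
Variable R : realType.

Definition x0 {n : nat} (x : 'rV[R]_n.+1) : R := x ord0 ord0.

Definition dotp {n : nat} (x y : 'rV[R]_n.+1) : R := \sum_(i < n.+1) x ord0 i * y ord0 i.

(* Integral over S^n of f : R^{n+1} -> R with respect to the standard
   (unnormalized) surface measure dS^n, defined by hyperspherical coordinates:
     S^0 = {+1,-1} with counting measure, and for n >= 1
     \int_{S^n} f = \int_0^pi sin^{n-1}(t) \int_{S^{n-1}} f(cos t, sin t * y) dy dt.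
   Here t is the first polar angle theta_0, so x_0 = cos theta_0. *)
Fixpoint sphere_int (n : nat) : ('rV[R]_n.+1 -> R) -> R :=
  match n return ('rV[R]_n.+1 -> R) -> R with
  | 0 => fun f => f (const_mx 1) + f (const_mx (-1))
  | m.+1 => fun f =>
      \int[@lebesgue_measure R]_(t in `[0, pi]) 
        (sin t ^+ m * sphere_int (fun y : 'rV[R]_m.+1 =>
                         f (row_mx (const_mx (cos t) : 'rV[R]_1) (sin t *: y))))
  end.

Definition Vk (d k : nat) : R := sphere_int (n := d) (fun x => 1 + x0 x ^+ k).

(* The profile F_k of the density g_k: g_k(y) = F_k(<y,P>) = (1 + <y,P>^k)/V_k. *)
Definition Fk (d k : nat) (t : R) : R := (1 + t ^+ k) / Vk d k.

(* Variance of an isotropic random variable on S^d with density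
   y |-> f y: V = E[2 - 2 cos theta_0] = \int_{S^d} (2 - 2 x_0) f(x) dx. *)
Definition sph_variance (d : nat) (f : 'rV[R]_d.+1 -> R) : R :=
  sphere_int (n := d) (fun x => (2 - 2 * x0 x) * f x).

(* Density of X_1 + X_2 for independent isotropic X_1, X_2 with densities
   F_1(<y,P>), F_2(<y,P>):  f(x) = \int_{S^d} F_1(<x',P>) F_2(<x,x'>) dx'. *)
Definition sum_density (d : nat) (F1 F2 : R -> R) (x : 'rV[R]_d.+1) : R :=
  sphere_int (n := d) (fun x' => F1 (x0 x') * F2 (dotp x x')).

End Sphere.

(* Main.v *)
Require Import Defs.
From HB Require Import structures.
From mathcomp Require Import all_boot all_order all_algebra.
From mathcomp Require Import all_classical all_reals all_analysis.
From mathcomp Require Import ring lra zify.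
Import Order.TTheory GRing.Theory Num.Theory.
Import numFieldNormedType.Exports.
Local Open Scope ring_scope.

Lemma FTC0pi {R : realType} (f F : R -> R) : continuous f -> (forall x : R, is_derive x (1:R) F (f x)) ->
  \int[@lebesgue_measure R]_(x in `[0, pi]) f x = F pi - F 0.
Proof.
move=> cf dF.
have cF : continuous F.
  move=> x; apply: differentiable_continuous; apply/derivable1_diffP.
  by have [] := dF x.
rewrite /Rintegral (continuous_FTC2 (F:=F)) ?pi_gt0 //=.
- by apply: continuous_subspaceT.
- split.
  + by move=> x _; have [] := dF x.
  + exact: cvg_at_right_filter (cF 0).
  + exact: cvg_at_left_filter (cF pi).
- by move=> x _; rewrite derive1E derive_val.
Qed.

Lemma cont_sc {R : realType} (k : R) p q :
  continuous (fun t : R => k * (sin t ^+ p * cos t ^+ q)).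
Proof.
move=> x.
apply: (@continuousM _ _ (fun _ => k) (fun t => sin t ^+ p * cos t ^+ q)).
  exact: cst_continuous.
apply: (@continuousM _ _ (fun t => sin t ^+ p) (fun t => cos t ^+ q)).
  apply: (continuous_comp (f := sin) (g := fun z => z ^+ p)).
    exact: continuous_sin.
  exact: exprn_continuous.
apply: (continuous_comp (f := cos) (g := fun z => z ^+ q)).
  exact: continuous_cos.
exact: exprn_continuous.
Qed.

Lemma cont_sum {R : realType} (I : Type) (s : seq I) (k : I -> R) (p q : I -> nat) :
  continuous (fun t : R => \sum_(i <- s) k i * (sin t ^+ p i * cos t ^+ q i)).
Proof.
elim: s => [|i s IH] x.
  under eq_fun do rewrite big_nil.
  exact: cst_continuous.
under eq_fun do rewrite big_cons.
apply: (@continuousD _ _ _ (fun t => k i * (sin t ^+ p i * cos t ^+ q i))).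
  exact: cont_sc.
exact: IH.
Qed.

Lemma cont_int {R : realType} (f : R -> R) : continuous f ->
  (@lebesgue_measure R).-integrable `[0, pi] (EFin \o f).
Proof.
move=> cf; apply: continuous_compact_integrable; first exact: segment_compact.
by apply: continuous_subspaceT.
Qed.

Definition W {R : realType} (p q : nat) : R :=
  \int[@lebesgue_measure R]_(t in `[0, pi]) (sin t ^+ p * cos t ^+ q).

Lemma RintS {R : realType} (I : Type) (s : seq I) (k : I -> R) (p q : I -> nat) :
  \int[@lebesgue_measure R]_(t in `[0, pi]) (\sum_(i <- s) k i * (sin t ^+ p i * cos t ^+ q i))
  = \sum_(i <- s) k i * W (p i) (q i).
Proof.
elim: s => [|i s IH].
  under eq_Rintegral => t _ do rewrite big_nil.
  by rewrite big_nil Rintegral_cst ?mul0r //; exact: measurable_itv.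
under eq_Rintegral => t _ do rewrite big_cons.
rewrite big_cons RintegralD; first last.
- exact/cont_int/cont_sum.
- exact/cont_int/cont_sc.
- exact: measurable_itv.
rewrite IH; congr (_ + _).
have := (@RintegralZl _ _ _ (@lebesgue_measure R) `[0, pi] (fun t => sin t ^+ p i * cos t ^+ q i) (k i)).
rewrite /W => <- //.
have := @cont_int R (fun t => sin t ^+ p i * cos t ^+ q i); apply => x.
have := cont_sc 1 (p i) (q i) x.
by under eq_fun do rewrite mul1r.
Qed.

Lemma W_ftc {R : realType} p q :
  (p.+1)%:R * W p q.+2 - (q.+1)%:R * W p.+2 q = 0 :> R.
Proof.
pose s := [:: ((p.+1)%:R : R, p, q.+2); (- (q.+1)%:R, p.+2, q)].
have := RintS _ s (fun i => i.1.1) (fun i => i.1.2) (fun i => i.2).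
rewrite !big_cons big_nil /= addr0 mulNr => <-.
have dF : forall x : R, is_derive x (1:R) (fun t => sin t ^+ p.+1 * cos t ^+ q.+1)
   (\sum_(i <- s) i.1.1 * (sin x ^+ i.1.2 * cos x ^+ i.2)).
  move=> x.
  have := is_deriveM (is_deriveX p.+1 (is_derive_sin x)) (is_deriveX q.+1 (is_derive_cos x)).
  have -> : (sin ^+ p.+1 * cos ^+ q.+1)%R = (fun t : R => sin t ^+ p.+1 * cos t ^+ q.+1).
    by apply/funext => t; rewrite !fctE.
  move=> H; apply: is_derive_eq.
  rewrite !big_cons big_nil /= !fctE.
  rewrite /GRing.scale /= !exprS; ring.
rewrite (FTC0pi _ _ (cont_sum _ s _ _ _) dF).
by rewrite sinpi sin0 !expr0n /= !mul0r subrr.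
Qed.

Lemma W_pyth {R : realType} p q : W p q = W p.+2 q + W p q.+2 :> R.
Proof.
pose s := [:: ((1 : R), p.+2, q); (1, p, q.+2)].
have := RintS _ s (fun i => i.1.1) (fun i => i.1.2) (fun i => i.2).
rewrite !big_cons big_nil /= addr0 !mul1r => <-.
apply: eq_Rintegral => x _.
rewrite !big_cons big_nil /= addr0 !mul1r.
have h := sin2cos2 x.
rewrite -(addn2 p) -(addn2 q) !exprD h; ring.
Qed.

Lemma W_q1 {R : realType} p : W p 1 = 0 :> R.
Proof.
pose s := [:: ((p.+1)%:R : R, p, 1%N)].
have := RintS _ s (fun i => i.1.1) (fun i => i.1.2) (fun i => i.2).
rewrite !big_cons big_nil /= addr0.
have dF : forall x : R, is_derive x (1:R) (fun t => sin t ^+ p.+1)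
   (\sum_(i <- s) i.1.1 * (sin x ^+ i.1.2 * cos x ^+ i.2)).
  move=> x.
  have := is_deriveX p.+1 (is_derive_sin x).
  have -> : (sin ^+ p.+1)%R = (fun t : R => sin t ^+ p.+1).
    by apply/funext => t; rewrite !fctE.
  move=> H; apply: is_derive_eq.
  rewrite !big_cons big_nil /= /GRing.scale /=; ring.
rewrite (FTC0pi _ _ (cont_sum _ s _ _ _) dF).
rewrite sinpi sin0 !expr0n /= subrr => /esym /eqP.
by rewrite mulf_eq0 pnatr_eq0 /= => /eqP.
Qed.

Lemma W00 {R : realType} : W 0 0 = pi :> R.
Proof.
pose s := [:: ((1 : R), 0%N, 0%N)].
have := RintS _ s (fun i => i.1.1) (fun i => i.1.2) (fun i => i.2).
rewrite !big_cons big_nil /= addr0 mul1r => <-.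
have dF : forall x : R, is_derive x (1:R) id
   (\sum_(i <- s) i.1.1 * (sin x ^+ i.1.2 * cos x ^+ i.2)).
  move=> x; apply: is_derive_eq.
  by rewrite !big_cons big_nil /= !expr0 !mulr1 addr0.
by rewrite (FTC0pi _ _ (cont_sum _ s _ _ _) dF) subr0.
Qed.

Lemma W10 {R : realType} : W 1 0 = 2 :> R.
Proof.
pose s := [:: ((1 : R), 1%N, 0%N)].
have := RintS _ s (fun i => i.1.1) (fun i => i.1.2) (fun i => i.2).
rewrite !big_cons big_nil /= addr0 mul1r => <-.
have dF : forall x : R, is_derive x (1:R) (fun t => - cos t)
   (\sum_(i <- s) i.1.1 * (sin x ^+ i.1.2 * cos x ^+ i.2)).
  move=> x.
  have := is_deriveN (is_derive_cos x).
  move=> H; apply: (is_derive_eq H).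
  by rewrite !big_cons big_nil /= expr1 expr0 !mulr1 addr0 opprK mul1r.
rewrite (FTC0pi _ _ (cont_sum _ s _ _ _) dF).
by rewrite cospi cos0 opprK; lra.
Qed.

Lemma natS_neq0 {R : realType} n : (n.+1)%:R != 0 :> R.
Proof. by rewrite pnatr_eq0. Qed.

Lemma sum_nat_eq {R : realType} p q : ((p + q).+2)%:R = (p.+1)%:R + (q.+1)%:R :> R.
Proof. by rewrite -natrD addnS addSn. Qed.

Lemma Wq2 {R : realType} p q :
  W p q.+2 = (q.+1)%:R / ((p + q).+2)%:R * W p q :> R.
Proof.
have h1 := W_ftc (R:=R) p q; have h2 := W_pyth (R:=R) p q.
have hd := natS_neq0 (R:=R) (p + q).+1.
rewrite h2; move: hd h1; rewrite sum_nat_eq.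
set P := (p.+1)%:R; set Q := (q.+1)%:R => hd h1.
have -> : W p.+2 q = P / Q * W p q.+2.
  have hq : Q != 0 by exact: natS_neq0.
  apply: (mulfI hq); rewrite mulrA mulrCA divff // mulr1.
  by apply/eqP; rewrite eq_sym -subr_eq0 h1.
field; apply/andP; split; apply: lt0r_neq0;
  have := ler0n R p; have := ler0n R q; lra.
Qed.


Lemma Wp2 {R : realType} p q :
  W p.+2 q = (p.+1)%:R / ((p + q).+2)%:R * W p q :> R.
Proof.
have h2 := W_pyth (R:=R) p q.
have -> : W p.+2 q = W p q - W p q.+2 :> R by rewrite h2; ring.
rewrite Wq2 sum_nat_eq.
set P := (p.+1)%:R; set Q := (q.+1)%:R.
field; apply: lt0r_neq0.
have := ler0n R p; have := ler0n R q; lra.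
Qed.

Lemma Wodd {R : realType} p a : W p a.*2.+1 = 0 :> R.
Proof.
elim: a => [|a IH]; first exact: W_q1.
by rewrite doubleS Wq2 IH mulr0.
Qed.

Definition Pp {R : realType} (M r : nat) : R :=
  \prod_(q < r) ((q.*2.+1)%:R / (M + q.*2.+1)%:R).

Definition Bp {R : realType} (p r : nat) : R :=
  \prod_(q < r) ((p + q.*2).+1%:R / (p + q.*2).+2%:R).

Lemma Wclosed {R : realType} p a : W p a.*2 = W p 0 * Pp p.+1 a :> R.
Proof.
elim: a => [|a IH]; first by rewrite /Pp big_ord0 mulr1.
rewrite doubleS Wq2 IH /Pp big_ord_recr /= addSn addnS; ring.
Qed.

Lemma Bclosed {R : realType} p r : W (p + r.*2) 0 = W p 0 * Bp p r :> R.
Proof.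
elim: r => [|r IH]; first by rewrite /Bp big_ord0 mulr1 addn0.
rewrite doubleS addnS addnS Wp2 IH /Bp big_ord_recr /= addn0; ring.
Qed.

Lemma W0pos {R : realType} p : 0 < W p 0 :> R.
Proof.
suff : 0 < W p 0 :> R /\ 0 < W p.+1 0 :> R by case.
elim: p => [|p [h1 h2]].
  by rewrite W00 W10 pi_gt0.
split => //; rewrite Wp2; apply: mulr_gt0 => //.
Qed.

Lemma Pp_ge0 {R : realType} M r : 0 <= Pp M r :> R.
Proof.
rewrite /Pp; apply: prodr_ge0 => q _; apply: divr_ge0; exact: ler0n.
Qed.

Local Close Scope ring_scope.
Local Open Scope nat_scope.

Definition df (n : nat) : nat := \prod_(q < n) q.*2.+1.

Lemma fact_even n : (n.*2)`! = 2 ^ n * n`! * df n.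
Proof.
elim: n => [|n IH]; first by rewrite /df big_ord0.
rewrite doubleS !factS IH /df big_ord_recr /= expnS.
rewrite -!mul2n; ring.
Qed.

Lemma fact_odd n : (n.*2.+1)`! = 2 ^ n * n`! * df n.+1.
Proof.
rewrite factS fact_even /df big_ord_recr /=; ring.
Qed.

Lemma df_split r a : df (r + a) = df r * \prod_(q < a) (r.*2 + q.*2).+1.
Proof.
rewrite /df big_split_ord /=; congr (_ * _); apply: eq_bigr => q _ /=.
by rewrite doubleD.
Qed.

Lemma fact_gt0' n : 0 < n`!.
Proof. exact: fact_gt0. Qed.

Lemma combE a r : 'C((r + a).*2, a.*2) * \prod_(q < a) q.*2.+1 =
   'C(r + a, a) * \prod_(q < a) (r.*2 + q.*2).+1.
Proof.
set X := \prod_(q < a) (r.*2 + q.*2).+1.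
have hK : 0 < df r * 2 ^ (r + a) * a`! * r`!.
  rewrite !muln_gt0 expn_gt0 /= !fact_gt0 andbT /df.
  by rewrite prodn_gt0.
apply/eqP; rewrite -(eqn_pmul2r hK); apply/eqP.
have e1 := bin_fact (leq_addl r a).
have e2 : (r + a).*2 - a.*2 = r.*2 by rewrite doubleD addnK.
have e3 : 'C((r + a).*2, a.*2) * ((a.*2)`! * ((r + a).*2 - a.*2)`!) = ((r + a).*2)`!.
  by apply: bin_fact; rewrite leq_double leq_addl.
rewrite e2 in e3; rewrite addnK in e1.
transitivity ((r + a).*2)`!.
  rewrite -e3 !fact_even expnD /df; ring.
rewrite fact_even -e1 df_split expnD /X; ring.
Qed.

Lemma combO a r : 'C((r + a).*2.+1, a.*2.+1) * \prod_(q < a.+1) q.*2.+1 =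
   'C(r + a, a) * \prod_(q < a.+1) (r.*2 + q.*2).+1.
Proof.
set X := \prod_(q < a.+1) (r.*2 + q.*2).+1.
have hK : 0 < df r * 2 ^ (r + a) * a`! * r`!.
  rewrite !muln_gt0 expn_gt0 /= !fact_gt0 andbT /df.
  by rewrite prodn_gt0.
apply/eqP; rewrite -(eqn_pmul2r hK); apply/eqP.
have e1 := bin_fact (leq_addl r a).
have e2 : (r + a).*2.+1 - a.*2.+1 = r.*2 by rewrite subSS doubleD addnK.
have e3 : 'C((r + a).*2.+1, a.*2.+1) * ((a.*2.+1)`! * ((r + a).*2.+1 - a.*2.+1)`!) = ((r + a).*2.+1)`!.
  by apply: bin_fact; rewrite ltnS leq_double leq_addl.
rewrite e2 in e3; rewrite addnK in e1.
transitivity ((r + a).*2.+1)`!.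
  rewrite -e3 fact_odd fact_even expnD /df; ring.
rewrite fact_odd -e1 -addnS df_split expnD /X; ring.
Qed.

Local Open Scope ring_scope.

Lemma prod_div {R : realType} a (f g : nat -> nat) :
  \prod_(q < a) ((f q)%:R / (g q)%:R) = (\prod_(q < a) f q)%:R / (\prod_(q < a) g q)%:R :> R.
Proof. by rewrite big_split /= prodfV !natr_prod. Qed.

Lemma PB {R : realType} m r : Pp m r * Bp m r = Pp m.+1 r :> R.
Proof.
rewrite /Pp /Bp -big_split /=; apply: eq_bigr => q _.
rewrite !addnS addSn; have := natS_neq0 (R:=R) (m + q.*2).
set D := ((m + q.*2).+1)%:R => hD; field.
apply/andP; split; apply: lt0r_neq0;
  have := ler0n R m; have := ler0n R q.*2; lra.
Qed.

Lemma Psplit {R : realType} M r a : Pp M (r + a) =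
  Pp M r * \prod_(q < a) ((r.*2 + q.*2).+1%:R / (M + (r.*2 + q.*2).+1)%:R) :> R.
Proof.
rewrite /Pp big_split_ord /=; congr (_ * _); apply: eq_bigr => q _.
by rewrite doubleD.
Qed.

Lemma TE {R : realType} m a r :
  ('C((r + a).*2, a.*2))%:R * Pp m r * (Bp m r * Pp (m + r.*2).+1 a) =
  Pp m.+1 (r + a) * ('C(r + a, a))%:R :> R.
Proof.
rewrite mulrA -(mulrA _ (Pp m r)) PB Psplit.
have -> : Pp (m + r.*2).+1 a = \prod_(q < a) (q.*2.+1%:R / (m.+1 + (r.*2 + q.*2).+1)%:R) :> R.
  rewrite /Pp; apply: eq_bigr => q _; congr (_ / _%:R).
  by rewrite !addSn !addnS addnA.
have E1 := prod_div (R:=R) a (fun q => (r.*2 + q.*2).+1) (fun q => (m.+1 + (r.*2 + q.*2).+1)%N).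
have E2 := prod_div (R:=R) a (fun q => q.*2.+1) (fun q => (m.+1 + (r.*2 + q.*2).+1)%N).
rewrite /= in E1 E2; rewrite E1 E2.
have := combE a r.
set C2 := 'C(_, _); set C1 := 'C(_, _); set X := \prod_(q < a) _; set Y := \prod_(q < a) _.
set Dn := \prod_(q < a) _.
move=> e.
have e' : C2%:R * X%:R = C1%:R * Y%:R :> R by rewrite -!natrM e.
have -> : C2%:R * Pp m.+1 r * (X%:R / Dn%:R) = Pp m.+1 r * (C2%:R * X%:R) / Dn%:R :> R by ring.
rewrite e'; ring.
Qed.

Lemma TO {R : realType} m a r :
  ('C((r + a).*2.+1, a.*2.+1))%:R * Pp m r * (Bp m r * Pp (m + r.*2).+1 a.+1) =
  Pp m.+1 (r + a).+1 * ('C(r + a, a))%:R :> R.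
Proof.
rewrite mulrA -(mulrA _ (Pp m r)) PB.
rewrite (_ : (r + a).+1 = (r + a.+1)%N); last by rewrite addnS.
rewrite Psplit.
have -> : Pp (m + r.*2).+1 a.+1 = \prod_(q < a.+1) (q.*2.+1%:R / (m.+1 + (r.*2 + q.*2).+1)%:R) :> R.
  rewrite /Pp; apply: eq_bigr => q _; congr (_ / _%:R).
  by rewrite !addSn !addnS addnA.
have E1 := prod_div (R:=R) a.+1 (fun q => (r.*2 + q.*2).+1) (fun q => (m.+1 + (r.*2 + q.*2).+1)%N).
have E2 := prod_div (R:=R) a.+1 (fun q => q.*2.+1) (fun q => (m.+1 + (r.*2 + q.*2).+1)%N).
rewrite /= in E1 E2; rewrite E1 E2.
have := combO a r.
set C2 := 'C(_, _); set C1 := 'C(_, _); set X := \prod_(q < a.+1) _; set Y := \prod_(q < a.+1) _.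
set Dn := \prod_(q < a.+1) _.
move=> e.
have e' : C2%:R * X%:R = C1%:R * Y%:R :> R by rewrite -!natrM e.
have -> : C2%:R * Pp m.+1 r * (X%:R / Dn%:R) = Pp m.+1 r * (C2%:R * X%:R) / Dn%:R :> R by ring.
rewrite e'; ring.
Qed.

Inductive Pf {R : realType} (n : nat) : ('rV[R]_n.+1 -> R) -> Prop :=
| Pf_c c : Pf n (fun _ => c)
| Pf_x i : Pf n (fun x => x ord0 i)
| Pf_add f g : Pf n f -> Pf n g -> Pf n (fun x => f x + g x)
| Pf_mul f g : Pf n f -> Pf n g -> Pf n (fun x => f x * g x).

Fixpoint allPf {R : realType} {m : nat} (s : seq (nat * nat * ('rV[R]_m.+1 -> R))) : Prop :=
  if s is e :: s' then Pf m e.2 /\ allPf s' else True.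

Definition decomp {R : realType} {m : nat} (f : 'rV[R]_m.+2 -> R)
  (s : seq (nat * nat * ('rV[R]_m.+1 -> R))) :=
  allPf s /\ forall (c s' : R) (y : 'rV[R]_m.+1),
    f (row_mx (const_mx c : 'rV[R]_1) (s' *: y)) =
    \sum_(e <- s) c ^+ e.1.1 * s' ^+ e.1.2 * e.2 y.

Lemma allPf_cat {R : realType} m (s1 s2 : seq (nat * nat * ('rV[R]_m.+1 -> R))) :
  allPf s1 -> allPf s2 -> allPf (s1 ++ s2).
Proof. by elim: s1 => //= e s IH [? ?] ?; split => //; apply: IH. Qed.

Lemma decomp_mul {R : realType} {m} (s1 s2 : seq (nat * nat * ('rV[R]_m.+1 -> R))) :
  allPf s1 -> allPf s2 -> exists s, allPf s /\ forall c s' y,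
   (\sum_(e <- s1) c ^+ e.1.1 * s' ^+ e.1.2 * e.2 y) *
   (\sum_(e <- s2) c ^+ e.1.1 * s' ^+ e.1.2 * e.2 y) =
   \sum_(e <- s) c ^+ e.1.1 * s' ^+ e.1.2 * e.2 y.
Proof.
elim: s1 => [|e1 s1 IH] /= h1 h2.
  by exists [::]; split => // c s' y; rewrite !big_nil mul0r.
case: h1 => he1 h1; have [s [hs Hs]] := IH h1 h2.
exists ([seq ((e1.1.1 + e2.1.1)%N, (e1.1.2 + e2.1.2)%N, fun y => e1.2 y * e2.2 y) | e2 <- s2] ++ s).
split.
  apply: allPf_cat => //.
  clear -he1 h2; elim: s2 h2 => //= e2 s2 IH2 [he2 h2]; split; last exact: IH2.
  exact: Pf_mul.
move=> c s' y; rewrite big_cons mulrDl Hs big_cat /= big_map; congr (_ + _).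
rewrite mulr_sumr; apply: eq_bigr => e2 _ /=.
rewrite !exprD; ring.
Qed.

Lemma Pf_decomp {R : realType} m (f : 'rV[R]_m.+2 -> R) : Pf m.+1 f -> exists s, decomp f s.
Proof.
elim => {f}.
- move=> c; exists [:: (0%N, 0%N, fun _ => c)]; split; first by split => //; exact: Pf_c.
  move=> c' s' y.
  by rewrite big_cons big_nil /= !expr0 !mul1r addr0.
- move=> i; have [j hj|j hj] := splitP (i : 'I_(1 + m.+1)).
  + have -> : i = lshift m.+1 j :> 'I_(1 + m.+1) by apply/val_inj.
    exists [:: (1%N, 0%N, fun _ => 1)]; split; first by split => //; exact: Pf_c.
    move=> c s' y; rewrite big_cons big_nil /=.
    etransitivity; first exact: (row_mxEl (const_mx c : 'rV[R]_1) (s' *: y) ord0 j).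
    rewrite mxE.
    by rewrite expr1 expr0 !mulr1 addr0.
  + have -> : i = rshift 1 j :> 'I_(1 + m.+1) by apply/val_inj.
    exists [:: (0%N, 1%N, fun y : 'rV[R]_m.+1 => y ord0 j)]; split; first by split => //; exact: Pf_x.
    move=> c s' y; rewrite big_cons big_nil /=.
    etransitivity; first exact: (row_mxEr (const_mx c : 'rV[R]_1) (s' *: y) ord0 j).
    rewrite mxE.
    by rewrite expr1 expr0 mul1r addr0.
- move=> f g _ [s1 [h1 H1]] _ [s2 [h2 H2]].
  exists (s1 ++ s2); split; first exact: allPf_cat.
  by move=> c s' y; rewrite H1 H2 big_cat.
- move=> f g _ [s1 [h1 H1]] _ [s2 [h2 H2]].
  have [s [hs Hs]] := decomp_mul _ _ h1 h2.
  exists s; split => // c s' y; by rewrite H1 H2 Hs.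
Qed.

Lemma Pf_sum {R : realType} m (s : seq (nat * nat * ('rV[R]_m.+1 -> R))) k :
  allPf s -> Pf m (fun y => \sum_(e <- s) k e * e.2 y).
Proof.
elim: s => [|e s IH] /=.
  move=> _; have -> : (fun y : 'rV[R]_m.+1 => \sum_(e <- [::]) k e * e.2 y) = fun _ => 0.
    by apply/funext => y; rewrite big_nil.
  exact: Pf_c.
case=> he hs.
have -> : (fun y => \sum_(e0 <- e :: s) k e0 * e0.2 y) =
   (fun y => (fun y => k e) y * e.2 y + (fun y => \sum_(e0 <- s) k e0 * e0.2 y) y).
  by apply/funext => y; rewrite big_cons.
by apply: Pf_add; [apply: Pf_mul => //; exact: Pf_c | exact: IH].
Qed.

Definition Ladd {R : realType} m := forall f g : 'rV[R]_m.+1 -> R, Pf m f -> Pf m g ->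
  sphere_int (fun x => f x + g x) = sphere_int f + sphere_int g.
Definition Lsc {R : realType} m := forall (k : R) (f : 'rV[R]_m.+1 -> R), Pf m f ->
  sphere_int (fun x => k * f x) = k * sphere_int f.

Lemma Lsum {R : realType} {m : nat} : @Ladd R m -> @Lsc R m ->
  forall (s : seq (nat * nat * ('rV[R]_m.+1 -> R))) k, allPf s ->
  sphere_int (fun y => \sum_(e <- s) k e * e.2 y) = \sum_(e <- s) k e * sphere_int e.2.
Proof.
move=> Ha Hs; elim => [|e s IH] k /=.
  move=> _; rewrite big_nil.
  have H0 := Hs 0 (fun _ => 0) (Pf_c _ _).
  rewrite [RHS]mul0r in H0.
  transitivity (sphere_int (fun _ : 'rV[R]_m.+1 => (0:R) * 0)); last exact: H0.
  by apply: f_equal; apply/funext => y; rewrite big_nil mul0r.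
case=> he hs; rewrite big_cons -IH // -Hs // -Ha //; last exact: Pf_sum.
  by apply: f_equal; apply/funext => y; rewrite big_cons.
by apply: Pf_mul => //; exact: Pf_c.
Qed.

Lemma Lform {R : realType} {m : nat} : @Ladd R m -> @Lsc R m ->
  forall (f : 'rV[R]_m.+2 -> R) s, decomp f s ->
  sphere_int f = \sum_(e <- s) sphere_int e.2 * W (m + e.1.2) e.1.1.
Proof.
move=> Ha Hs f s [hs Hf] /=.
have R1 := RintS _ s (fun e => sphere_int e.2) (fun e => (m + e.1.2)%N) (fun e => e.1.1).
simpl in R1; rewrite -R1.
apply: eq_Rintegral => t _.
under eq_fun do rewrite Hf.
rewrite (Lsum Ha Hs s (fun e => cos t ^+ e.1.1 * sin t ^+ e.1.2)) // mulr_sumr.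
apply: eq_bigr => e _; rewrite exprD; ring.
Qed.

Lemma Llin {R : realType} m : @Ladd R m /\ @Lsc R m.
Proof.
elim: m => [|m [Ha Hs]].
  split => [f g _ _ | k f _] /=; ring.
split.
- move=> f g /Pf_decomp [s1 D1] /Pf_decomp [s2 D2].
  have D : decomp (fun x => f x + g x) (s1 ++ s2).
    case: D1 D2 => h1 H1 [h2 H2].
    split; first exact: allPf_cat.
    by move=> c s' y; rewrite H1 H2 big_cat.
  by rewrite (Lform Ha Hs _ _ D) big_cat (Lform Ha Hs _ _ D1) (Lform Ha Hs _ _ D2).
- move=> k f /Pf_decomp [s D1].
  pose s2 := [seq (e.1, fun y => k * e.2 y) | e <- s].
  have D : decomp (fun x => k * f x) s2.
    case: D1 => h H.
    split.
      rewrite /s2; clear H; elim: (s) h => //= e s' IH [he hs]; split; last exact: IH.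
      by apply: Pf_mul => //; exact: Pf_c.
    move=> c s' y; rewrite H big_map mulr_sumr; apply: eq_bigr => e _ /=; ring.
  rewrite (Lform Ha Hs _ _ D) (Lform Ha Hs _ _ D1) big_map mulr_sumr.
  case: D1 => h _; clear D s2; elim: s h => [|e s IH] /=; first by rewrite !big_nil.
  by case=> he hs; rewrite !big_cons IH // Hs //; ring.
Qed.

Definition rs {R : realType} {m : nat} (x : 'rV[R]_m.+2) : 'rV[R]_m.+1 :=
  rsubmx (x : 'rV[R]_(1 + m.+1)).

Lemma dotp_split {R : realType} m (x y : 'rV[R]_m.+2) :
  dotp x y = x0 x * x0 y + dotp (rs x) (rs y).
Proof.
rewrite /dotp /x0 /rs.
have -> : \sum_(i < m.+2) x ord0 i * y ord0 i = \sum_(i < 1 + m.+1) x ord0 i * y ord0 i by [].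
rewrite big_split_ord /= big_ord1.
have -> : lshift m.+1 (ord0 : 'I_1) = ord0 by apply/val_inj.
by congr (_ + _); apply: eq_bigr => i _; rewrite !mxE.
Qed.

Lemma x0_row {R : realType} m (c : R) (v : 'rV[R]_m.+1) :
  x0 (row_mx (const_mx c : 'rV[R]_1) v : 'rV[R]_m.+2) = c.
Proof.
rewrite /x0.
have -> : (ord0 : 'I_m.+2) = lshift m.+1 (ord0 : 'I_1) by apply/val_inj.
etransitivity; first exact: (row_mxEl (const_mx c : 'rV[R]_1) v ord0 ord0).
by rewrite mxE.
Qed.

Lemma rs_row {R : realType} m (c : R) (v : 'rV[R]_m.+1) :
  rs (row_mx (const_mx c : 'rV[R]_1) v : 'rV[R]_m.+2) = v.
Proof. by rewrite /rs row_mxKr. Qed.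

Lemma dotpZ {R : realType} m (k : R) (y w : 'rV[R]_m.+1) :
  dotp (k *: y) w = k * dotp y w.
Proof. by rewrite /dotp mulr_sumr; apply: eq_bigr => i _; rewrite mxE mulrA. Qed.

Lemma dotp_row {R : realType} m (c : R) (v : 'rV[R]_m.+1) (u : 'rV[R]_m.+2) :
  dotp (row_mx (const_mx c : 'rV[R]_1) v : 'rV[R]_m.+2) u = c * x0 u + dotp v (rs u).
Proof. by rewrite dotp_split x0_row rs_row. Qed.

Lemma dotpZr {R : realType} m (k : R) (y w : 'rV[R]_m.+1) :
  dotp y (k *: w) = k * dotp y w.
Proof. by rewrite /dotp mulr_sumr; apply: eq_bigr => i _; rewrite mxE mulrCA. Qed.

Lemma Pf_ext {R : realType} {m} {f g : 'rV[R]_m.+1 -> R} :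
  (forall x, f x = g x) -> Pf m f -> Pf m g.
Proof. by move=> e; have -> : f = g by apply/funext. Qed.

Lemma Pf_pow {R : realType} m (f : 'rV[R]_m.+1 -> R) n :
  Pf m f -> Pf m (fun x => f x ^+ n).
Proof.
move=> hf; elim: n => [|n IH].
  by apply: (Pf_ext (f := fun _ => 1)) => [x|]; [rewrite expr0 | exact: Pf_c].
apply: (Pf_ext (f := fun x => f x * f x ^+ n)) => [x|]; first by rewrite exprS.
exact: Pf_mul.
Qed.

Lemma Pf_bsum {R : realType} {m} {I : Type} (r : seq I) {F : I -> 'rV[R]_m.+1 -> R} :
  (forall i, Pf m (F i)) -> Pf m (fun y => \sum_(i <- r) F i y).
Proof.
move=> hF; elim: r => [|i r IH].
  by apply: (Pf_ext (f := fun _ => 0)) => [x|]; [rewrite big_nil | exact: Pf_c].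
apply: (Pf_ext (f := fun y => F i y + \sum_(j <- r) F j y)) => [x|]; first by rewrite big_cons.
exact: Pf_add.
Qed.

Lemma Pf_dotp {R : realType} m (w : 'rV[R]_m.+1) : Pf m (fun y => dotp y w).
Proof.
rewrite /dotp; apply: (@Pf_bsum _ _ _ _ (fun i y => y ord0 i * w ord0 i)) => i.
by apply: Pf_mul; [exact: Pf_x | exact: Pf_c].
Qed.

Lemma Pf_dotpl {R : realType} m (w : 'rV[R]_m.+1) : Pf m (fun y => dotp w y).
Proof.
rewrite /dotp; apply: (@Pf_bsum _ _ _ _ (fun i y => w ord0 i * y ord0 i)) => i.
by apply: Pf_mul; [exact: Pf_c | exact: Pf_x].
Qed.

Lemma Pf_x0 {R : realType} m : Pf m (fun x : 'rV[R]_m.+1 => x0 x).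
Proof. exact: Pf_x. Qed.

Definition om {R : realType} m : R := sphere_int (n := m) (fun _ => 1).
Definition cm {R : realType} m j : R := sphere_int (n := m) (fun x => x0 x ^+ j).

Lemma LformN {R : realType} {m} {f : 'rV[R]_m.+2 -> R} {s} : decomp f s ->
  sphere_int f = \sum_(e <- s) sphere_int e.2 * W (m + e.1.2) e.1.1.
Proof. by have [Ha Hs] := Llin (R:=R) m; exact: Lform. Qed.

Lemma cm_S {R : realType} m j : cm m.+1 j = om m * W m j :> R.
Proof.
rewrite /cm (LformN (s := [:: (j, 0%N, fun _ => 1)])).
  by rewrite big_cons big_nil /= addn0 addr0.
split; first by split => //; exact: Pf_c.
move=> c s' y; rewrite big_cons big_nil /= x0_row expr0 !mulr1 addr0 //.
Qed.

Lemma om_S {R : realType} m : om m.+1 = om m * W m 0 :> R.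
Proof.
have := cm_S (R:=R) m 0; rewrite /cm /om => <-.
by apply: f_equal; apply/funext => x; rewrite expr0.
Qed.

Lemma om_pos {R : realType} m : 0 < om m :> R.
Proof.
elim: m => [|m IH]; first by rewrite /om /=; lra.
by rewrite om_S mulr_gt0 // W0pos.
Qed.

Lemma x0_cst {R : realType} (c : R) : x0 (const_mx c : 'rV[R]_1) = c.
Proof. by rewrite /x0 mxE. Qed.

Lemma cm_even {R : realType} m r : cm m r.*2 = om m * Pp m r :> R.
Proof.
case: m => [|m].
  rewrite /cm /om /= !x0_cst expr1n -mul2n exprM sqrrN !expr1n.
  rewrite (_ : Pp 0 r = 1) ?mulr1 //.
  by rewrite /Pp; apply: big1 => q _; rewrite add0n divff // natS_neq0.
by rewrite cm_S Wclosed om_S mulrA.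
Qed.

Lemma cm_odd {R : realType} m r : cm m r.*2.+1 = 0 :> R.
Proof.
case: m => [|m].
  rewrite /cm /= !x0_cst expr1n exprS -mul2n exprM sqrrN !expr1n; ring.
by rewrite cm_S Wodd mulr0.
Qed.

Lemma Lext {R : realType} m (f g : 'rV[R]_m.+1 -> R) :
  (forall x, dotp x x = 1 -> f x = g x) -> sphere_int f = sphere_int g.
Proof.
elim: m f g => [|m IH] f g H /=.
  rewrite !H // /dotp big_ord1 !mxE; ring.
apply: eq_Rintegral => t _; congr (_ * _); apply: IH => y hy; apply: H.
rewrite dotp_row x0_row rs_row dotpZ dotpZr hy mulr1 -expr2 -expr2 sin2cos2; ring.
Qed.

Lemma sum_par_even {R : realType} (F : nat -> R) s :
  \sum_(i < (s.*2).+1) F i = \sum_(a < s.+1) F a.*2 + \sum_(a < s) F a.*2.+1.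
Proof.
elim: s => [|s IH]; first by rewrite !big_ord1 big_ord0 addr0.
rewrite doubleS big_ord_recr big_ord_recr /= IH.
rewrite [X in _ = X + _]big_ord_recr [X in _ = _ + X]big_ord_recr /= doubleS; ring.
Qed.

Lemma sum_par_odd {R : realType} (F : nat -> R) s :
  \sum_(i < (s.*2).+2) F i = \sum_(a < s.+1) F a.*2 + \sum_(a < s.+1) F a.*2.+1.
Proof.
by rewrite big_ord_recr /= sum_par_even [X in _ = _ + X]big_ord_recr /= addrA.
Qed.

Lemma parity j : exists s, j = s.*2 \/ j = s.*2.+1.
Proof.
exists j./2; rewrite -{1 3}(odd_double_half j).
by case: (odd j); [right | left].
Qed.

Lemma half_odd s : (s.*2.+1)./2 = s.
Proof. by rewrite /= uphalf_double. Qed.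

Lemma allPf_map {R : realType} m (I : Type) (r : seq I) (a b : I -> nat)
  (g : I -> 'rV[R]_m.+1 -> R) :
  (forall i, Pf m (g i)) -> allPf [seq (a i, b i, g i) | i <- r].
Proof. by move=> h; elim: r => //= i r IH; split. Qed.

Lemma e2 {R : realType} (x : R) s : x ^+ s.*2 = (x ^+ 2) ^+ s.
Proof. by rewrite -mul2n exprM. Qed.

Lemma e2o {R : realType} (x : R) s : x ^+ s.*2.+1 = x * (x ^+ 2) ^+ s.
Proof. by rewrite exprS e2. Qed.

Lemma binom_decomp {R : realType} (c s' u0 D : R) j :
  (c * u0 + s' * D) ^+ j = \sum_(i <- index_iota 0 j.+1)
     c ^+ i * s' ^+ (j - i) * ((u0 ^+ i *+ 'C(j, i)) * D ^+ (j - i)).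
Proof.
rewrite addrC exprDn big_mkord; apply: eq_bigr => i _.
rewrite -[in LHS]mulr_natr -[in RHS](mulr_natr (u0 ^+ i)) !exprMn.
set A := s' ^+ _; set B := D ^+ _; set C1 := c ^+ _; set C2 := u0 ^+ _; set K := _%:R.
ring.
Qed.

Lemma N1e {R : realType} s : (-1 : R) ^+ s.*2 = 1.
Proof. by rewrite e2 sqrrN expr1n expr1n. Qed.
Lemma N1o {R : realType} s : (-1 : R) ^+ s.*2.+1 = -1.
Proof. by rewrite exprS N1e mulr1. Qed.


Lemma Z0 {R : realType} : (forall (u : 'rV[R]_1) j,
  sphere_int (fun x => dotp x u ^+ j) = cm 0 j * dotp u u ^+ (j./2)) /\
  (forall (u : 'rV[R]_1) j,
  sphere_int (fun x => x0 x * dotp x u ^+ j) = x0 u * cm 0 j.+1 * dotp u u ^+ (j./2)).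
Proof.
split => u j; case: (parity j) => s [->|->]; rewrite /cm.
all: rewrite [sphere_int _]/= [sphere_int _]/=.
all: rewrite !x0_cst /dotp !big_ord1 !mxE /x0; set v := u ord0 ord0.
all: rewrite ?mul1r ?mulN1r (exprNn v).
- by rewrite N1e !expr1n doubleK (e2 v) -expr2; ring.
- by rewrite N1o !expr1n half_odd (e2o v) -expr2; ring.
- by rewrite N1e N1o !expr1n; ring.
- by rewrite N1o -doubleS N1e !expr1n half_odd (e2o v) -expr2; ring.
Qed.

Lemma Zsum {R : realType} {m : nat} :
  (forall (w : 'rV[R]_m.+1) j, sphere_int (fun x => dotp x w ^+ j) = cm m j * dotp w w ^+ (j./2)) ->
  forall (u : 'rV[R]_m.+2) j e,
  sphere_int (fun x => x0 x ^+ e * dotp x u ^+ j) =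
  \sum_(i < j.+1) (x0 u ^+ i *+ 'C(j, i)) * (cm m (j - i) * dotp (rs u) (rs u) ^+ ((j - i)./2))
     * W (m + (j - i)) (i + e).
Proof.
move=> IHZ u j e.
pose S := [seq ((i + e)%N, (j - i)%N, fun y => (x0 u ^+ i *+ 'C(j, i)) * dotp y (rs u) ^+ (j - i)) | i <- index_iota 0 j.+1].
have D : decomp (fun x => x0 x ^+ e * dotp x u ^+ j) S.
  split.
    apply: allPf_map => i; apply: Pf_mul; first exact: Pf_c.
    exact/Pf_pow/Pf_dotp.
  move=> c s' y; rewrite x0_row dotp_row dotpZ binom_decomp big_map mulr_sumr.
  apply: eq_bigr => i _ /=; rewrite exprD.
  set A := c ^+ i; set B := c ^+ e; set C := s' ^+ _; set K := _ *+ _; set E := dotp _ _ ^+ _.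
  ring.
rewrite (LformN D) big_map big_mkord; apply: eq_bigr => i _ /=.
have [_ Hs] := Llin (R:=R) m.
rewrite Hs; last exact/Pf_pow/Pf_dotp.
by rewrite IHZ addnC.
Qed.

Lemma ZstepZ {R : realType} m :
  (forall (w : 'rV[R]_m.+1) j, sphere_int (fun x => dotp x w ^+ j) = cm m j * dotp w w ^+ (j./2)) ->
  forall (u : 'rV[R]_m.+2) j,
  sphere_int (fun x => dotp x u ^+ j) = cm m.+1 j * dotp u u ^+ (j./2).
Proof.
move=> IHZ u j.
have := Zsum IHZ u j 0.
have -> : (fun x => x0 x ^+ 0 * dotp x u ^+ j) = (fun x => dotp x u ^+ j).
  by apply/funext => x; rewrite expr0 mul1r.
move=> ->.
rewrite (dotp_split _ u u); set u0 := x0 u; set X := dotp (rs u) (rs u).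
case: (parity j) => s [->|->].
- pose F := fun i : nat => (u0 ^+ i *+ 'C(s.*2, i)) * (cm m (s.*2 - i) * X ^+ ((s.*2 - i)./2)) * W (m + (s.*2 - i)) (i + 0).
  transitivity (\sum_(i < s.*2.+1) F i); first by apply: eq_bigr.
  rewrite sum_par_even.
  rewrite [X in _ + X]big1 ?addr0; last by move=> a _; rewrite /F addn0 Wodd mulr0.
  rewrite doubleK cm_even om_S addrC exprDn mulr_sumr.
  apply: eq_bigr => a _.
  have ha : (a <= s)%N by rewrite -ltnS.
  set r := (s - a)%N.
  have es : s = (r + a)%N by rewrite subnK.
  rewrite /F addn0 -doubleB -/r doubleK cm_even Wclosed Bclosed.
  have -> : 'C(s.*2, a.*2) = 'C((r + a).*2, a.*2) by rewrite -es.
  have -> : Pp m.+1 s = Pp m.+1 (r + a) :> R by rewrite -es.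
  have -> : 'C(s, a) = 'C(r + a, a) by rewrite -es.
  have key := TE (R:=R) m a r.
  rewrite -[_ *+ 'C((r + a).*2, _)]mulr_natr -[_ *+ 'C(r + a, a)]mulr_natr.
  rewrite (e2 u0) -expr2.
  set C2 := ('C((r + a).*2, a.*2))%:R in key *.
  set C1 := ('C(r + a, a))%:R in key *.
  set P1 := Pp m r in key *; set B1 := Bp m r in key *; set P2 := Pp (m + r.*2).+1 a in key *.
  set P3 := Pp m.+1 (r + a) in key *.
  set U := (u0 ^+ 2) ^+ a; set Xr := X ^+ r; set Om := om m; set W0 := W m 0.
  transitivity ((C2 * P1 * (B1 * P2)) * (Om * W0 * Xr * U)); first by ring.
  rewrite key; ring.
- rewrite cm_odd mul0r; apply: big1 => i _.
  have hi := ltn_ord i.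
  case: (parity i) => a [e|e]; rewrite e addn0.
  + have -> : (s.*2.+1 - a.*2 = (s - a).*2.+1)%N by rewrite e in hi; lia.
    by rewrite cm_odd mul0r mulr0 mul0r.
  + by rewrite Wodd mulr0.
Qed.

Lemma ZstepZv {R : realType} m :
  (forall (w : 'rV[R]_m.+1) j, sphere_int (fun x => dotp x w ^+ j) = cm m j * dotp w w ^+ (j./2)) ->
  forall (u : 'rV[R]_m.+2) j,
  sphere_int (fun x => x0 x * dotp x u ^+ j) = x0 u * cm m.+1 j.+1 * dotp u u ^+ (j./2).
Proof.
move=> IHZ u j.
have := Zsum IHZ u j 1.
have -> : (fun x => x0 x ^+ 1 * dotp x u ^+ j) = (fun x => x0 x * dotp x u ^+ j).
  by apply/funext => x; rewrite expr1.
move=> ->.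
rewrite (dotp_split _ u u); set u0 := x0 u; set X := dotp (rs u) (rs u).
case: (parity j) => s [->|->].
- rewrite cm_odd mulr0 mul0r; apply: big1 => i _.
  have hi := ltn_ord i.
  case: (parity i) => a [e|e]; rewrite e addn1.
  + by rewrite Wodd mulr0.
  + have -> : (s.*2 - a.*2.+1 = (s - a.+1).*2.+1)%N by rewrite e in hi; lia.
    by rewrite cm_odd mul0r mulr0 mul0r.
- pose F := fun i : nat => (u0 ^+ i *+ 'C(s.*2.+1, i)) * (cm m (s.*2.+1 - i) * X ^+ ((s.*2.+1 - i)./2)) * W (m + (s.*2.+1 - i)) (i + 1).
  transitivity (\sum_(i < s.*2.+2) F i); first by apply: eq_bigr.
  rewrite sum_par_odd.
  rewrite [X in X + _]big1 ?add0r; last first.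
    move=> a _; rewrite /F.
    have ha : (a <= s)%N by rewrite -ltnS.
    have -> : (s.*2.+1 - a.*2 = (s - a).*2.+1)%N by lia.
    by rewrite cm_odd mul0r mulr0 mul0r.
  rewrite half_odd -doubleS cm_even om_S addrC exprDn mulr_sumr.
  apply: eq_bigr => a _.
  have ha : (a <= s)%N by rewrite -ltnS.
  set r := (s - a)%N.
  have es : s = (r + a)%N by rewrite subnK.
  rewrite /F addn1.
  have -> : (s.*2.+1 - a.*2.+1 = r.*2)%N by rewrite subSS -doubleB.
  rewrite -doubleS doubleK cm_even Wclosed Bclosed.
  have -> : 'C(s.*2.+1, a.*2.+1) = 'C((r + a).*2.+1, a.*2.+1) by rewrite -es.
  have -> : Pp m.+1 s.+1 = Pp m.+1 (r + a).+1 :> R by rewrite -es.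
  have -> : 'C(s, a) = 'C(r + a, a) by rewrite -es.
  have key := TO (R:=R) m a r.
  rewrite -[_ *+ 'C((r + a).*2.+1, _)]mulr_natr -[_ *+ 'C(r + a, a)]mulr_natr.
  rewrite (e2o u0) -expr2.
  set C2 := ('C((r + a).*2.+1, a.*2.+1))%:R in key *.
  set C1 := ('C(r + a, a))%:R in key *.
  set P1 := Pp m r in key *; set B1 := Bp m r in key *; set P2 := Pp (m + r.*2).+1 a.+1 in key *.
  set P3 := Pp m.+1 (r + a).+1 in key *.
  set U := (u0 ^+ 2) ^+ a; set Xr := X ^+ r; set Om := om m; set W0 := W m 0.
  transitivity ((C2 * P1 * (B1 * P2)) * (u0 * Om * W0 * Xr * U)); first by ring.
  rewrite key; ring.
Qed.

Lemma Zall {R : realType} m :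
  (forall (u : 'rV[R]_m.+1) j, sphere_int (fun x => dotp x u ^+ j) = cm m j * dotp u u ^+ (j./2)) /\
  (forall (u : 'rV[R]_m.+1) j,
   sphere_int (fun x => x0 x * dotp x u ^+ j) = x0 u * cm m j.+1 * dotp u u ^+ (j./2)).
Proof.
elim: m => [|m [IHZ _]]; first exact: Z0.
by split; [exact: ZstepZ | exact: ZstepZv].
Qed.

Fixpoint allT {I : Type} (P : I -> Prop) (s : seq I) : Prop :=
  if s is i :: s' then P i /\ allT P s' else True.

Lemma Pf_lsum {R : realType} {n} {I : Type} (s : seq I) (k : I -> R) (g : I -> 'rV[R]_n.+1 -> R) :
  allT (fun i => Pf n (g i)) s -> Pf n (fun y => \sum_(i <- s) k i * g i y).
Proof.
elim: s => [|i s IH] /=.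
  by move=> _; apply: (Pf_ext (f := fun _ => 0)) => [x|]; [rewrite big_nil | exact: Pf_c].
case=> hi hs; apply: (Pf_ext (f := fun y => k i * g i y + \sum_(j <- s) k j * g j y)) => [x|].
  by rewrite big_cons.
by apply: Pf_add; [apply: Pf_mul => //; exact: Pf_c | exact: IH].
Qed.

Lemma Lgen {R : realType} {n} {I : Type} (s : seq I) (k : I -> R) (g : I -> 'rV[R]_n.+1 -> R) :
  allT (fun i => Pf n (g i)) s ->
  sphere_int (fun y => \sum_(i <- s) k i * g i y) = \sum_(i <- s) k i * sphere_int (g i).
Proof.
have [Ha Hs] := Llin (R:=R) n.
elim: s => [|i s IH] /=.
  move=> _; rewrite big_nil.
  have H0 := Hs 0 (fun _ => 0) (Pf_c _ _).
  rewrite [RHS]mul0r in H0.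
  transitivity (sphere_int (fun _ : 'rV[R]_n.+1 => (0:R) * 0)); last exact: H0.
  by apply: f_equal; apply/funext => y; rewrite big_nil mul0r.
case=> hi hs; rewrite big_cons -IH // -Hs // -Ha //.
- by apply: f_equal; apply/funext => y; rewrite big_cons.
- by apply: Pf_mul => //; exact: Pf_c.
- exact: Pf_lsum.
Qed.

Definition Sep {R : realType} {n} (P : 'rV[R]_n.+1 -> 'rV[R]_n.+1 -> R) :=
  exists s : seq (('rV[R]_n.+1 -> R) * ('rV[R]_n.+1 -> R)),
    allT (fun e => Pf n e.1 /\ Pf n e.2) s /\
    forall x x', P x x' = \sum_(e <- s) e.1 x * e.2 x'.

Lemma allT_cat {I : Type} (P : I -> Prop) s1 s2 : allT P s1 -> allT P s2 -> allT P (s1 ++ s2).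
Proof. by elim: s1 => //= i s IH [? ?] ?; split => //; apply: IH. Qed.

Lemma Sep_add {R : realType} {n} (P Q : 'rV[R]_n.+1 -> 'rV[R]_n.+1 -> R) :
  Sep P -> Sep Q -> Sep (fun x x' => P x x' + Q x x').
Proof.
move=> [s1 [h1 H1]] [s2 [h2 H2]]; exists (s1 ++ s2); split; first exact: allT_cat.
by move=> x x'; rewrite H1 H2 big_cat.
Qed.

Lemma Sep_mul {R : realType} {n} (P Q : 'rV[R]_n.+1 -> 'rV[R]_n.+1 -> R) :
  Sep P -> Sep Q -> Sep (fun x x' => P x x' * Q x x').
Proof.
move=> [s1 [h1 H1]] [s2 [h2 H2]].
suff [s [hs Hs]] : exists s : seq (('rV[R]_n.+1 -> R) * ('rV[R]_n.+1 -> R)),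
    allT (fun e => Pf n e.1 /\ Pf n e.2) s /\ forall x x',
   (\sum_(e <- s1) e.1 x * e.2 x') * (\sum_(e <- s2) e.1 x * e.2 x') =
   \sum_(e <- s) e.1 x * e.2 x'.
  by exists s; split => // x x'; rewrite H1 H2 Hs.
clear H1; elim: s1 h1 => [|e1 s1 IH] /= h1.
  by exists [::]; split => // x x'; rewrite !big_nil mul0r.
case: h1 => [[he1 he1'] h1]; have [s [hs Hs]] := IH h1.
exists ([seq ((fun x => e1.1 x * e2.1 x), (fun x' => e1.2 x' * e2.2 x')) | e2 <- s2] ++ s).
split.
  apply: allT_cat => //.
  clear -he1 he1' h2; elim: s2 h2 => //= e2 s2 IH2 [[he2 he2'] h2]; split; last exact: IH2.
  by split; apply: Pf_mul.
move=> x x'; rewrite big_cons mulrDl Hs big_cat /= big_map; congr (_ + _).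
by rewrite mulr_sumr; apply: eq_bigr => e2 _ /=; ring.
Qed.

Lemma Sep_l {R : realType} {n} (g : 'rV[R]_n.+1 -> R) : Pf n g -> Sep (fun x _ => g x).
Proof.
move=> hg; exists [:: (g, fun _ => 1)]; split; first by split => //; split => //; exact: Pf_c.
by move=> x x'; rewrite big_cons big_nil /= mulr1 addr0.
Qed.

Lemma Sep_r {R : realType} {n} (g : 'rV[R]_n.+1 -> R) : Pf n g -> Sep (fun _ x' => g x').
Proof.
move=> hg; exists [:: (fun _ => 1, g)]; split; first by split => //; split => //; exact: Pf_c.
by move=> x x'; rewrite big_cons big_nil /= mul1r addr0.
Qed.

Lemma Sep_dotp {R : realType} {n} : Sep (fun x x' : 'rV[R]_n.+1 => dotp x x').
Proof.
exists [seq ((fun x : 'rV[R]_n.+1 => x ord0 i), (fun x' : 'rV[R]_n.+1 => x' ord0 i)) | i <- index_enum 'I_n.+1].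
split.
  elim: (index_enum _) => //= i r IH; split => //; split; exact: Pf_x.
by move=> x x'; rewrite big_map.
Qed.

Lemma Sep_pow {R : realType} {n} (P : 'rV[R]_n.+1 -> 'rV[R]_n.+1 -> R) k :
  Sep P -> Sep (fun x x' => P x x' ^+ k).
Proof.
move=> hP; elim: k => [|k IH].
  have [s [hs Hs]] := Sep_l _ (Pf_c n (1:R)).
  by exists s; split => // x x'; rewrite -Hs expr0.
have [s [hs Hs]] := Sep_mul _ _ hP IH.
by exists s; split => // x x'; rewrite -Hs exprS.
Qed.

Lemma sphFub {R : realType} {n} (P : 'rV[R]_n.+1 -> 'rV[R]_n.+1 -> R) : Sep P ->
  sphere_int (fun x => sphere_int (fun x' => P x x')) =
  sphere_int (fun x' => sphere_int (fun x => P x x')).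
Proof.
move=> [s [hs Hs]].
have -> : (fun x => sphere_int (fun x' => P x x')) =
          (fun x => \sum_(e <- s) sphere_int e.2 * e.1 x).
  apply/funext => x.
  transitivity (sphere_int (fun x' => \sum_(e <- s) e.1 x * e.2 x')).
    by apply: f_equal; apply/funext => x'; rewrite Hs.
  rewrite (Lgen s (fun e => e.1 x) (fun e => e.2)); last first.
    by clear Hs; elim: s hs => //= e s IH [[_ ?] ?]; split => //; exact: IH.
  by apply: eq_bigr => e _; rewrite mulrC.
have -> : (fun x' => sphere_int (fun x => P x x')) =
          (fun x' => \sum_(e <- s) sphere_int e.1 * e.2 x').
  apply/funext => x'.
  transitivity (sphere_int (fun x => \sum_(e <- s) e.2 x' * e.1 x)).
    by apply: f_equal; apply/funext => x; rewrite Hs; apply: eq_bigr => e _; rewrite mulrC.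
  rewrite (Lgen s (fun e => e.2 x') (fun e => e.1)); last first.
    by clear Hs; elim: s hs => //= e s IH [[? _] ?]; split => //; exact: IH.
  by apply: eq_bigr => e _; rewrite mulrC.
rewrite (Lgen s (fun e => sphere_int e.2) (fun e => e.1)); last first.
  by clear Hs; elim: s hs => //= e s IH [[? _] ?]; split => //; exact: IH.
rewrite (Lgen s (fun e => sphere_int e.1) (fun e => e.2)); last first.
  by clear Hs; elim: s hs => //= e s IH [[_ ?] ?]; split => //; exact: IH.
by apply: eq_bigr => e _; rewrite mulrC.
Qed.

Lemma cm1 {R : realType} d : sphere_int (fun x : 'rV[R]_d.+1 => x0 x ^+ 1) = 0.
Proof. exact: (cm_odd d 0). Qed.

Lemma Vk_eq {R : realType} d k : Vk R d k = om d + cm d k :> R.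
Proof.
have [Ha _] := Llin (R:=R) d.
by rewrite /Vk Ha //; [exact: Pf_c | exact/Pf_pow/Pf_x0].
Qed.

Lemma cm_ge0 {R : realType} d k : 0 <= cm d k :> R.
Proof.
case: (parity k) => s [->|->]; last by rewrite cm_odd.
by rewrite cm_even mulr_ge0 ?Pp_ge0 // ltW // om_pos.
Qed.

Lemma Vk_neq0 {R : realType} d k : Vk R d k != 0 :> R.
Proof.
rewrite Vk_eq; apply: lt0r_neq0; have := om_pos (R:=R) d; have := cm_ge0 (R:=R) d k; lra.
Qed.

Lemma Pf_F {R : realType} d k (h : 'rV[R]_d.+1 -> R) : Pf d h ->
  Pf d (fun x => Fk d k (h x)).
Proof.
move=> hh; rewrite /Fk; apply: (@Pf_mul R d _ (fun _ => (Vk R d k)^-1)); last exact: Pf_c.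
by apply: Pf_add; [exact: Pf_c | exact: Pf_pow].
Qed.

Lemma var_eq {R : realType} d k :
  sph_variance (fun x : 'rV[R]_d.+1 => Fk d k (x0 x)) = 2 - 2 * (cm d k.+1 / Vk R d k) :> R.
Proof.
have hV := Vk_neq0 (R:=R) d k.
rewrite /sph_variance /Fk.
set V := Vk R d k.
transitivity (sphere_int (fun x : 'rV[R]_d.+1 => \sum_(e <- [:: (2 / V, fun _ : 'rV[R]_d.+1 => 1);
     (2 / V, fun x => x0 x ^+ k); (-2 / V, fun x => x0 x ^+ 1); (-2 / V, fun x => x0 x ^+ k.+1)]) e.1 * e.2 x)).
  apply: f_equal; apply/funext => x; rewrite !big_cons big_nil /= expr1 exprS.
  set a := x0 x; set b := a ^+ k; set iV := V^-1; ring.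
rewrite (Lgen _ (fun e => e.1) (fun e => e.2)); last first.
  by do ! split; try exact: Pf_c; exact/Pf_pow/Pf_x0.
rewrite !big_cons big_nil /= cm1.
rewrite /V Vk_eq /om /cm; field.
by rewrite -Vk_eq.
Qed.

Lemma Pf_1mx {R : realType} d : Pf d (fun x : 'rV[R]_d.+1 => 2 - 2 * x0 x).
Proof.
apply: (@Pf_add R d (fun _ => 2) (fun x => - (2 * x0 x))); first exact: Pf_c.
apply: (Pf_ext (f := fun x => -1 * (2 * x0 x))) => [x|]; first by rewrite mulN1r.
apply: (@Pf_mul R d (fun _ => -1) (fun x => 2 * x0 x)); first exact: Pf_c.
by apply: Pf_mul; [exact: Pf_c | exact: Pf_x0].
Qed.

Theorem main_thm (R : realType) (d : nat) (k l : nat) :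
  sph_variance (d := d) (sum_density (d := d) (@Fk R d k) (@Fk R d l))
  = (2 * (sph_variance (d := d) (fun x => @Fk R d k (x0 x)) + sph_variance (d := d) (fun x => @Fk R d l (x0 x)))
     - sph_variance (d := d) (fun x => @Fk R d k (x0 x)) * sph_variance (d := d) (fun x => @Fk R d l (x0 x))) / 2.
Proof.
have [Ha Hs] := Llin (R:=R) d.
rewrite !var_eq.
rewrite /sph_variance /sum_density.
transitivity (sphere_int (fun x : 'rV[R]_d.+1 => sphere_int (fun x' : 'rV[R]_d.+1 =>
   (2 - 2 * x0 x) * (Fk d k (x0 x') * Fk d l (dotp x x'))))).
  apply: f_equal; apply/funext => x; rewrite Hs //.
  by apply: Pf_mul; apply: Pf_F; [exact: Pf_x0 | exact: Pf_dotpl].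
rewrite sphFub; last first.
  apply: Sep_mul; first exact/Sep_l/Pf_1mx.
  apply: Sep_mul; first exact/Sep_r/Pf_F/Pf_x0.
  rewrite /Fk; apply: Sep_mul; last exact/Sep_l/Pf_c.
  by apply: Sep_add; [exact/Sep_l/Pf_c | exact/Sep_pow/Sep_dotp].
have hVk := Vk_neq0 (R:=R) d k; have hVl := Vk_neq0 (R:=R) d l.
set Ml := cm d l.+1 / Vk R d l.
transitivity (sphere_int (fun x' : 'rV[R]_d.+1 => (2 - 2 * Ml * x0 x') * Fk d k (x0 x'))).
  apply: Lext => x' hx'.
  set K := Fk d k (x0 x') / Vk R d l.
  transitivity (sphere_int (fun x : 'rV[R]_d.+1 => \sum_(e <- [:: (2 * K, fun _ : 'rV[R]_d.+1 => 1);
     (2 * K, fun x => dotp x x' ^+ l); (-2 * K, fun x => x0 x * dotp x x' ^+ 0);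
     (-2 * K, fun x => x0 x * dotp x x' ^+ l)]) e.1 * e.2 x)).
    apply: f_equal; apply/funext => x; rewrite !big_cons big_nil /= expr0 /K /Fk.
    set a := x0 x; set b := dotp x x' ^+ l; set iV := (Vk R d l)^-1; set F := (_ / Vk R d k).
    ring.
  rewrite (Lgen _ (fun e => e.1) (fun e => e.2)); last first.
    do ! split; try exact: Pf_c.
    - exact/Pf_pow/Pf_dotp.
    - by apply: Pf_mul; [exact: Pf_x0 | exact/Pf_pow/Pf_dotp].
    - by apply: Pf_mul; [exact: Pf_x0 | exact/Pf_pow/Pf_dotp].
  rewrite !big_cons big_nil /=.
  have [Z1 Z2] := Zall (R:=R) d.
  rewrite Z1 !Z2 hx' !expr1n !mulr1 (cm_odd d 0).
  rewrite /K /Ml -/(om d) Vk_eq; field.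
  by rewrite -Vk_eq.
set Mk := cm d k.+1 / Vk R d k.
transitivity (sphere_int (fun x : 'rV[R]_d.+1 => \sum_(e <- [:: (2 / Vk R d k, fun _ : 'rV[R]_d.+1 => 1);
     (2 / Vk R d k, fun x => x0 x ^+ k); (-2 * Ml / Vk R d k, fun x => x0 x ^+ 1);
     (-2 * Ml / Vk R d k, fun x => x0 x ^+ k.+1)]) e.1 * e.2 x)).
  apply: f_equal; apply/funext => x; rewrite !big_cons big_nil /= expr1 exprS /Fk.
  set a := x0 x; set b := a ^+ k; set iV := (Vk R d k)^-1.
  ring.
rewrite (Lgen _ (fun e => e.1) (fun e => e.2)); last first.
  by do ! split; try exact: Pf_c; exact/Pf_pow/Pf_x0.
rewrite !big_cons big_nil /= cm1.
rewrite -/(om d) -/(cm d k) -/(cm d k.+1) -/Mk.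
rewrite /Mk /Ml !Vk_eq; field.
by rewrite -!Vk_eq hVk hVl.
Qed.


Theorem lemma3p3 (R : realType) (d : nat) (hd : (2 <= d)%N) (k l : nat) :
  sph_variance (d := d) (sum_density (d := d) (@Fk R d k) (@Fk R d l))
  = (2 * (sph_variance (d := d) (fun x => @Fk R d k (x0 x)) + sph_variance (d := d) (fun x => @Fk R d l (x0 x)))
     - sph_variance (d := d) (fun x => @Fk R d k (x0 x)) * sph_variance (d := d) (fun x => @Fk R d l (x0 x))) / 2.
Proof. exact: main_thm. Qed.
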